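(* Let $\varphi : X\to X$ be a morphism in $\mathscr{C}$ with kernel $\kappa : K\to X$ and cokernel $\lambda : X\to L$. Then $\varphi$ has a dual core inverse if and only if $\varphi$ is regular and both $\kappa\lambda : K\to L$ and $\lambda^{*}\lambda : L\to L$ are invertible. In this case, for every $\psi : X\to X$ with $\varphi\psi\varphi=\varphi$, $$\varphi_{\mathrm{core}}=[1_X-\lambda(\lambda^{*}\lambda)^{-1}\lambda^{*}]\,\psi\,[1_X-\lambda(\kappa\lambda)^{-1}\kappa].$$
   Context: $\mathscr{C}$ is an additive category with an involution $*$: a map on morphisms sending $\varphi : X\to Y$ to $\varphi^* : Y \to X$ such that $(\varphi^* )^*=\varphi$, $(\varphi\psi)^*=\psi^*\varphi^*$ and $(\varphi+\phi)^*=\varphi^*+\phi^*$. Composition is written left to right: for $\varphi : X\to Y$ and $\psi : Y\to Z$, $\varphi\psi : X \to Z$ means ''first $\varphi$, then $\psi$''. A kernel of $\varphi : X\to Y$ is a morphism $\kappa : K\to X$ with $\kappa\varphi=0$ such that every $\alpha : M\to X$ with $\alpha\varphi=0$ factors uniquely as $\alpha=\alpha'\kappa$. A cokernel of $\varphi$ is a morphism $\lambda : Y\to L$ with $\varphi\lambda=0$ such that every $\beta : Y\to M$ with $\varphi\beta=0$ factors uniquely as $\beta=\lambda\beta'$. $\varphi$ is regular if there is $\chi$ with $\varphi\chi\varphi=\varphi$. A morphism is invertible if it has a two-sided inverse. For $\varphi : X\to X$, a dual core inverse of $\varphi$ is a morphism $\chi : X\to X$ with $(\chi\varphi)^*=\chi\varphi$,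 $\chi^2\varphi=\chi$ and $\varphi^2\chi=\varphi$. It is unique when it exists and is denoted $\varphi_{\mathrm{core}}$. *)

(* Defs.v *)
From HB Require Import structures.
From mathcomp Require Import all_boot ssralg.
Set Implicit Arguments. Unset Strict Implicit. Unset Printing Implicit Defensive.
Import GRing.Theory.
Local Open Scope ring_scope.

(* An additive category with an involution *.
   Composition is written LEFT TO RIGHT: ccomp f g = "first f, then g". *)
Structure AddInvCat := {
  Ob : Type;
  CHom : Ob -> Ob -> zmodType;
  ccomp : forall X Y Z : Ob, CHom X Y -> CHom Y Z -> CHom X Z;
  cidm : forall X : Ob, CHom X X;
  compA : forall X Y Z W (f : CHom X Y) (g : CHom Y Z) (h : CHom Z W),
      ccomp (ccomp f g) h = ccomp f (ccomp g h);
  comp1f : forall X Y (f : CHom X Y), ccomp (cidm X) f = f;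
  compf1 : forall X Y (f : CHom X Y), ccomp f (cidm Y) = f;
  compDl : forall X Y Z (f f' : CHom X Y) (g : CHom Y Z),
      ccomp (f + f') g = ccomp f g + ccomp f' g;
  compDr : forall X Y Z (f : CHom X Y) (g g' : CHom Y Z),
      ccomp f (g + g') = ccomp f g + ccomp f g';
  zob : Ob;
  zob_init : forall X (f g : CHom zob X), f = g;
  zob_term : forall X (f g : CHom X zob), f = g;
  bprod : Ob -> Ob -> Ob;
  bin1 : forall X Y, CHom X (bprod X Y);
  bin2 : forall X Y, CHom Y (bprod X Y);
  bpr1 : forall X Y, CHom (bprod X Y) X;
  bpr2 : forall X Y, CHom (bprod X Y) Y;
  bin1pr1 : forall X Y, ccomp (bin1 X Y) (bpr1 X Y) = cidm X;
  bin2pr2 : forall X Y, ccomp (bin2 X Y) (bpr2 X Y) = cidm Y;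
  bin1pr2 : forall X Y, ccomp (bin1 X Y) (bpr2 X Y) = 0;
  bin2pr1 : forall X Y, ccomp (bin2 X Y) (bpr1 X Y) = 0;
  bprsum : forall X Y,
      ccomp (bpr1 X Y) (bin1 X Y) + ccomp (bpr2 X Y) (bin2 X Y) = cidm (bprod X Y);
  cinv : forall X Y, CHom X Y -> CHom Y X;
  invK : forall X Y (f : CHom X Y), cinv (cinv f) = f;
  invM : forall X Y Z (f : CHom X Y) (g : CHom Y Z), cinv (ccomp f g) = ccomp (cinv g) (cinv f);
  invD : forall X Y (f g : CHom X Y), cinv (f + g) = cinv f + cinv g
}.

Arguments ccomp {_ X Y Z} f g.
Arguments cidm {_} X.
Arguments cinv {_ X Y} f.

Section Defs.
Variable C : AddInvCat.

Definition is_kernel (X Y K : Ob C) (phi : CHom X Y) (kap : CHom K X) : Prop :=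
  ccomp kap phi = 0 /\
  forall (M : Ob C) (a : CHom M X), ccomp a phi = 0 ->
    exists! a' : CHom M K, a = ccomp a' kap.

Definition is_cokernel (X Y L : Ob C) (phi : CHom X Y) (lam : CHom Y L) : Prop :=
  ccomp phi lam = 0 /\
  forall (M : Ob C) (b : CHom Y M), ccomp phi b = 0 ->
    exists! b' : CHom L M, b = ccomp lam b'.

Definition regular (X Y : Ob C) (phi : CHom X Y) : Prop :=
  exists chi : CHom Y X, ccomp (ccomp phi chi) phi = phi.

Definition is_inverse (X Y : Ob C) (f : CHom X Y) (g : CHom Y X) : Prop :=
  ccomp f g = cidm X /\ ccomp g f = cidm Y.

Definition invertible (X Y : Ob C) (f : CHom X Y) : Prop :=
  exists g : CHom Y X, is_inverse f g.

Definition is_dual_core_inverse (X : Ob C) (phi chi : CHom X X) : Prop :=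
  cinv (ccomp chi phi) = ccomp chi phi /\
  ccomp (ccomp chi chi) phi = chi /\
  ccomp (ccomp phi phi) chi = phi.
End Defs.

(* Main.v *)
Require Import Defs.
From HB Require Import structures.
From mathcomp Require Import all_boot ssralg.
Import GRing.Theory.
Local Open Scope ring_scope.

Section H.
Variable C : AddInvCat.
Lemma comp0r (X Y Z : Ob C) (f : CHom X Y) : ccomp f (0 : CHom Y Z) = 0.
Proof. apply: (addrI (ccomp f 0)); by rewrite -compDr !addr0. Qed.
Lemma comp0l (X Y Z : Ob C) (f : CHom Y Z) : ccomp (0 : CHom X Y) f = 0.
Proof. apply: (addrI (ccomp 0 f)); by rewrite -compDl !addr0. Qed.
Lemma compNr (X Y Z : Ob C) (f : CHom X Y) (g : CHom Y Z) : ccomp f (- g) = - ccomp f g.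
Proof. apply: (addrI (ccomp f g)); by rewrite -compDr !subrr comp0r. Qed.
Lemma compNl (X Y Z : Ob C) (f : CHom X Y) (g : CHom Y Z) : ccomp (- f) g = - ccomp f g.
Proof. apply: (addrI (ccomp f g)); by rewrite -compDl !subrr comp0l. Qed.
Lemma compBr (X Y Z : Ob C) (f : CHom X Y) (g h : CHom Y Z) : ccomp f (g - h) = ccomp f g - ccomp f h.
Proof. by rewrite compDr compNr. Qed.
Lemma compBl (X Y Z : Ob C) (f g : CHom X Y) (h : CHom Y Z) : ccomp (f - g) h = ccomp f h - ccomp g h.
Proof. by rewrite compDl compNl. Qed.
Lemma inv0 (X Y : Ob C) : cinv (0 : CHom X Y) = 0.
Proof. apply: (addrI (cinv (0 : CHom X Y))); by rewrite -invD !addr0. Qed.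
Lemma invN (X Y : Ob C) (f : CHom X Y) : cinv (- f) = - cinv f.
Proof. apply: (addrI (cinv f)); by rewrite -invD !subrr inv0. Qed.
Lemma invB (X Y : Ob C) (f g : CHom X Y) : cinv (f - g) = cinv f - cinv g.
Proof. by rewrite invD invN. Qed.
Lemma inv1 (X : Ob C) : cinv (cidm X) = cidm X.
Proof.
have h := invM (cinv (cidm X)) (cidm X).
rewrite !compf1 invK in h. rewrite compf1 in h. by rewrite -h.
Qed.
End H.
Set Implicit Arguments.
Local Notation cA := Defs.compA.
Local Infix "⨾" := ccomp (at level 40, left associativity).

Lemma mono_of_ker (C : AddInvCat) (X Y K : Ob C) (phi : CHom X Y) (kap : CHom K X) :
  is_kernel phi kap -> forall M (x y : CHom M K), x ⨾ kap = y ⨾ kap -> x = y.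
Proof.
move=> [hk hU] M x y e.
have [a' [_ ha']] := hU M (y ⨾ kap) (ltac:(by rewrite cA hk comp0r)).
by rewrite -(ha' x (esym e)) -(ha' y erefl).
Qed.

Lemma epi_of_cok (C : AddInvCat) (X Y L : Ob C) (phi : CHom X Y) (lam : CHom Y L) :
  is_cokernel phi lam -> forall M (x y : CHom L M), lam ⨾ x = lam ⨾ y -> x = y.
Proof.
move=> [hk hU] M x y e.
have [a' [_ ha']] := hU M (lam ⨾ y) (ltac:(by rewrite -cA hk comp0l)).
by rewrite -(ha' x (esym e)) -(ha' y erefl).
Qed.

Lemma inv_sym (C : AddInvCat) (L : Ob C) (w v : CHom L L) :
  cinv w = w -> is_inverse w v -> cinv v = v.
Proof.
move=> hw [h1 h2].
have e1 : cinv v ⨾ w = cidm L by rewrite -hw -invM h1 inv1.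
by rewrite -[cinv v]compf1 -h1 -cA e1 comp1f.
Qed.

Lemma formula (C : AddInvCat) (X K L : Ob C)
    (phi : CHom X X) (kap : CHom K X) (lam : CHom X L)
    (hker : is_kernel phi kap) (hcok : is_cokernel phi lam)
    (chi psi : CHom X X) (u : CHom L K) (v : CHom L L) :
     is_dual_core_inverse phi chi ->
     phi ⨾ psi ⨾ phi = phi ->
     is_inverse (kap ⨾ lam) u ->
     is_inverse (cinv lam ⨾ lam) v ->
     chi = (cidm X - lam ⨾ v ⨾ cinv lam) ⨾ psi ⨾ (cidm X - lam ⨾ u ⨾ kap).
Proof.
move=> [h1 [h2 h3]] hpsi [hu1 hu2] hv.
have [kphi hkU] := hker; have [plam hcU] := hcok.
have chil : chi ⨾ lam = 0 by rewrite -h2 cA plam comp0r.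
have pcp : phi ⨾ chi ⨾ phi = phi.
  by rewrite -{1}h3 !cA -(cA chi chi phi) h2 -cA h3.
have [c [hc _]] := hcU X (cidm X - chi ⨾ phi)
   (ltac:(by rewrite compBr compf1 -cA pcp subrr)).
have vs : cinv v = v.
  by apply: (@inv_sym C L _ v _ hv); rewrite invM invK.
have [hv1 hv2] := hv.
set E := cidm X - lam ⨾ v ⨾ cinv lam.
have Es : cinv E = E by rewrite /E invB inv1 !invM invK vs cA.
have El : E ⨾ lam = 0.
  by rewrite /E compBl comp1f !cA hv2 compf1 subrr.
have EP : E = E ⨾ (chi ⨾ phi).
  by apply/eqP; rewrite -subr_eq0 -{1}[E]compf1 -compBr hc -cA El comp0l.
have PE : chi ⨾ phi = chi ⨾ phi ⨾ E.
  apply/eqP; rewrite -subr_eq0 -{1}[chi ⨾ phi]compf1 -compBr /E opprB addrC subrK.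
  by rewrite !cA -(cA phi lam) plam comp0l comp0r.
have EeqP : E = chi ⨾ phi by rewrite -h1 PE invM Es h1 -EP.
have [d [hd _]] := hkU X (cidm X - phi ⨾ psi)
   (ltac:(by rewrite compBl comp1f hpsi subrr)).
set F := cidm X - lam ⨾ u ⨾ kap.
have kF : kap ⨾ F = 0.
  by rewrite /F compBr compf1 -!cA hu1 comp1f subrr.
rewrite EeqP (cA chi phi psi).
have -> : phi ⨾ psi = cidm X - d ⨾ kap by rewrite -hd opprB addrC subrK.
rewrite (@compBr _ _ _ _ chi) compf1 compBl !cA kF !comp0r subr0.
by rewrite /F compBr compf1 -!cA chil !comp0l subr0.
Qed.

Theorem theorem3p4 (C : AddInvCat) (X K L : Ob C)
    (phi : CHom X X) (kap : CHom K X) (lam : CHom X L)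
    (hker : is_kernel phi kap) (hcok : is_cokernel phi lam) :
  ((exists chi : CHom X X, is_dual_core_inverse phi chi) <->
     (regular phi /\ invertible (ccomp kap lam) /\ invertible (ccomp (cinv lam) lam)))
  /\
  (forall (chi psi : CHom X X) (u : CHom L K) (v : CHom L L),
     is_dual_core_inverse phi chi ->
     ccomp (ccomp phi psi) phi = phi ->
     is_inverse (ccomp kap lam) u ->
     is_inverse (ccomp (cinv lam) lam) v ->
     chi = ccomp (ccomp (cidm X - ccomp (ccomp lam v) (cinv lam)) psi)
                (cidm X - ccomp (ccomp lam u) kap)).
Proof.
split; last first. move=> chi psi u v q1 q2 q3 q4. exact: (@formula _ _ _ _ _ _ _ hker hcok _ _ _ _ q1 q2 q3 q4).
have mk := mono_of_ker hker; have el := epi_of_cok hcok.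
have [kphi hkU] := hker; have [plam hcU] := hcok.
split.
- move=> [chi [h1 [h2 h3]]].
  have chil : chi ⨾ lam = 0 by rewrite -h2 cA plam comp0r.
  have pcp : phi ⨾ chi ⨾ phi = phi.
    by rewrite -{1}h3 !cA -(cA chi chi phi) h2 -cA h3.
  split; first by exists chi.
  have [a' [ha' _]] := hkU X (cidm X - phi ⨾ chi)
     (ltac:(by rewrite compBl comp1f pcp subrr)).
  have [b' [hb' _]] := hcU X (cidm X - phi ⨾ chi)
     (ltac:(by rewrite compBr compf1 -cA h3 subrr)).
  have kE : kap ⨾ (cidm X - phi ⨾ chi) = kap.
    by rewrite compBr compf1 -cA kphi comp0l subr0.
  have lE : (cidm X - phi ⨾ chi) ⨾ lam = lam.
    by rewrite compBl comp1f cA chil comp0r subr0.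
  split.
    exists (b' ⨾ a'); split.
      apply: (mk K); rewrite comp1f !cA -ha' -[lam ⨾ (b' ⨾ _)]cA -hb' -cA.
      by rewrite kE kE.
    apply: (el L); rewrite !cA -[a' ⨾ (kap ⨾ _)]cA -ha' lE -cA -hb' lE.
    by rewrite compf1.
  have [c [hc _]] := hcU X (cidm X - chi ⨾ phi)
     (ltac:(by rewrite compBr compf1 -cA pcp subrr)).
  have cl1 : c ⨾ lam = cidm L.
    apply: (el L); rewrite -cA -hc compBl comp1f cA plam comp0r subr0.
    by rewrite compf1.
  have hcs : cinv c ⨾ cinv lam = lam ⨾ c by rewrite -invM -hc invB inv1 h1.
  have lc1 : cinv lam ⨾ cinv c = cidm L by rewrite -invM cl1 inv1.
  exists (c ⨾ cinv c); split.
    by rewrite !cA -[lam ⨾ (c ⨾ _)]cA -hcs cA lc1 compf1 lc1.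
  by rewrite !cA -[cinv c ⨾ (cinv lam ⨾ _)]cA hcs cA cl1 compf1 cl1.
- move=> [[psi hpsi] [[u [hu1 hu2]] [v hv]]].
  have vs : cinv v = v.
    by apply: (@inv_sym C L _ v _ hv); rewrite invM invK.
  have [hv1 hv2] := hv.
  set E := cidm X - lam ⨾ v ⨾ cinv lam.
  set F := cidm X - lam ⨾ u ⨾ kap.
  have Es : cinv E = E by rewrite /E invB inv1 !invM invK vs cA.
  have El : E ⨾ lam = 0.
    by rewrite /E compBl comp1f !cA hv2 compf1 subrr.
  have kF : kap ⨾ F = 0.
    by rewrite /F compBr compf1 -!cA hu1 comp1f subrr.
  have Fl : F ⨾ lam = 0.
    by rewrite /F compBl comp1f !cA hu2 compf1 subrr.
  have pE : phi ⨾ E = phi.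
    by rewrite /E compBr compf1 -!cA plam !comp0l subr0.
  have Fp : F ⨾ phi = phi.
    by rewrite /F compBl comp1f !cA kphi !comp0r subr0.
  have FE : F ⨾ E = F.
    by rewrite /E compBr compf1 -!cA Fl !comp0l subr0.
  have [d [hd _]] := hkU X (cidm X - phi ⨾ psi)
     (ltac:(by rewrite compBl comp1f hpsi subrr)).
  have [e [he _]] := hcU X (cidm X - psi ⨾ phi)
     (ltac:(by rewrite compBr compf1 -cA hpsi subrr)).
  have pp : phi ⨾ psi = cidm X - d ⨾ kap by rewrite -hd opprB addrC subrK.
  have pp' : psi ⨾ phi = cidm X - lam ⨾ e by rewrite -he opprB addrC subrK.
  have chp : E ⨾ psi ⨾ F ⨾ phi = E.
    by rewrite cA Fp cA pp' compBr compf1 -cA El comp0l subr0.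
  exists (E ⨾ psi ⨾ F); split; first by rewrite chp Es.
  split; first by rewrite cA chp cA FE.
  rewrite !cA -[phi ⨾ (E ⨾ _)]cA pE -[phi ⨾ (psi ⨾ _)]cA pp.
  rewrite compBl comp1f cA kF comp0r subr0.
  by rewrite /F compBr compf1 -!cA plam !comp0l subr0.
Qed.
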